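(* Let $F\colon\mathbb{R}^m\to\mathscr{P}(\mathbb{R}^n)$ be a multifunction definable in a polynomially bounded o-minimal structure, with closed graph $\Gamma_F$. Then for any $a\in\mathrm{dom}\,F$ and $y\in F(a)$ there exist a neighbourhood $U$ of $(a,y)$ and constants $C,\ell>0$ such that $$\|v-y\|\geq C\,d\big(x,(\Gamma_F)_y\big)^\ell,\qquad (x,v)\in\Gamma_F\cap U,$$ where $(\Gamma_F)_y=\{x\in\mathbb{R}^m\mid y\in F(x)\}$.
   Context: Definable multifunction: a definable set $\Gamma_F\subset\mathbb{R}^m\times\mathbb{R}^n$ with $F(x)=\{y\mid (x,y)\in\Gamma_F\}$, $\mathrm{dom}\,F=\{x\mid F(x)\neq\varnothing\}$. An o-minimal structure is polynomially bounded if every definable function $\mathbb{R}\to\mathbb{R}$ is bounded at $+\infty$ by some power $x^N$. *)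

(* Defs.v *)
(* classical reals. Points of R^k are lists of reals of length k. *)
From Stdlib Require Import Reals Lra List ClassicalEpsilon.
Import ListNotations.
Open Scope R_scope.

Definition edist (x z : list R) : R :=
  sqrt (fold_right Rplus 0 (map (fun p => (fst p - snd p) ^ 2) (combine x z))).

Definition is_glb (E : R -> Prop) (m : R) : Prop :=
  (forall r, E r -> m <= r) /\ (forall b, (forall r, E r -> b <= r) -> b <= m).

Definition Rinf (E : R -> Prop) : R :=
  epsilon (inhabits 0) (fun m => is_glb E m).

Definition dist_to (x : list R) (A : list R -> Prop) : R :=
  Rinf (fun r => exists z, A z /\ r = edist x z).

Definition rpow (t l : R) : R :=
  if Rle_dec t 0 then 0 else Rpower t l.

Definition closed_in (k : nat) (A : list R -> Prop) : Prop :=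
  forall p, length p = k ->
    (forall eps, 0 < eps -> exists q, A q /\ edist p q < eps) -> A p.

(* Intervals with possibly infinite endpoints (None = -oo / +oo). *)
Definition in_interval (iv : option R * option R) (r : R) : Prop :=
  (match fst iv with None => True | Some a => a < r end) /\
  (match snd iv with None => True | Some b => r < b end).

(* An o-minimal structure on the real field (van den Dries): Df n A means
   "A is a definable subset of R^n". *)
Record OMinimalStructure (Df : nat -> (list R -> Prop) -> Prop) : Prop := {
  om_sub : forall n A, Df n A -> forall x, A x -> length x = n;
  om_full : forall n, Df n (fun x => length x = n);
  om_compl : forall n A, Df n A -> Df n (fun x => length x = n /\ ~ A x);
  om_union : forall n A B, Df n A -> Df n B -> Df n (fun x => A x \/ B x);
  om_prodl : forall n A, Df n A -> Df (Datatypes.S n) (fun x => exists r z, x = r :: z /\ A z);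
  om_prodr : forall n A, Df n A -> Df (Datatypes.S n) (fun x => exists z r, x = z ++ [r] /\ A z);
  om_diag : forall n, (1 <= n)%nat ->
      Df n (fun x => length x = n /\ nth 0 x 0 = nth (n - 1)%nat x 0);
  om_proj : forall n A, Df (Datatypes.S n) A -> Df n (fun x => exists r, A (x ++ [r]));
  om_point : forall r, Df 1%nat (fun x => x = [r]);
  om_lt : Df 2%nat (fun x => exists a b, x = [a; b] /\ a < b);
  om_add : Df 3%nat (fun x => exists a b, x = [a; b; a + b]);
  om_mul : Df 3%nat (fun x => exists a b, x = [a; b; a * b]);
  om_ominimal : forall A, Df 1%nat A ->
      exists (I : list (option R * option R)) (P : list R),
        forall r, A [r] <-> ((exists iv, In iv I /\ in_interval iv r) \/ In r P)
}.

Definition polynomially_bounded (Df : nat -> (list R -> Prop) -> Prop) : Prop :=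
  forall f : R -> R, Df 2%nat (fun p => exists x, p = [x; f x]) ->
    exists (N : nat) (M : R), forall x, M < x -> Rabs (f x) <= x ^ N.

(* Main.v *)
Require Import Defs.
From Stdlib Require Import Reals List.
From Stdlib Require Import Lra Lia ZArith Rtopology ClassicalEpsilon Classical FunctionalExtensionality PropExtensionality.
Import ListNotations.
Open Scope R_scope.

Definition Dk (Df : nat -> (list R -> Prop) -> Prop) k (P : list R -> Prop) :=
  Df k (fun L => length L = k /\ P L).

Lemma Df_ext {Df : nat -> (list R -> Prop) -> Prop} n (A B : list R -> Prop) :
  (forall x, A x <-> B x) -> Df n A -> Df n B.
Proof.
  intros H HA. assert (E : A = B).
  { apply functional_extensionality; intro x; apply propositional_extensionality; apply H. }
  now rewrite <- E.
Qed.

Lemma Dk_ext {Df : nat -> (list R -> Prop) -> Prop} k (P Q : list R -> Prop) :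
  (forall L, length L = k -> (P L <-> Q L)) -> Dk Df k P -> Dk Df k Q.
Proof.
  unfold Dk. intros H. apply Df_ext. intros x; cbv beta; cbv beta; split; intros [Hl Hx]; split; auto; apply (H x Hl); auto.
Qed.


Lemma Df_Dk {Df} (HS : OMinimalStructure Df) n A : Df n A -> Dk Df n A.
Proof.
  unfold Dk. intros H. apply (Df_ext n A); auto. intros x; cbv beta; split; [intros Hx; split; auto; eapply om_sub; eauto | tauto].
Qed.

Lemma Dk_true {Df} (HS : OMinimalStructure Df) k : Dk Df k (fun _ => True).
Proof.
  unfold Dk. apply (Df_ext k (fun x => length x = k)); [intros; tauto | apply om_full; auto].
Qed.

Lemma Dk_not {Df} (HS : OMinimalStructure Df) k P : Dk Df k P -> Dk Df k (fun L => ~ P L).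
Proof.
  unfold Dk in *. intros H. apply om_compl in H; auto. revert H. apply Df_ext. intros x; cbv beta; tauto.
Qed.

Lemma Dk_or {Df} (HS : OMinimalStructure Df) k P Q : Dk Df k P -> Dk Df k Q -> Dk Df k (fun L => P L \/ Q L).
Proof.
  unfold Dk in *. intros H1 H2. pose proof (om_union _ HS _ _ _ H1 H2) as H. revert H. apply Df_ext. intros x; cbv beta; tauto.
Qed.

Lemma Dk_and {Df} (HS : OMinimalStructure Df) k P Q : Dk Df k P -> Dk Df k Q -> Dk Df k (fun L => P L /\ Q L).
Proof.
  intros H1 H2. apply Dk_not in H1; auto. apply Dk_not in H2; auto.
  pose proof (Dk_not HS _ _ (Dk_or HS _ _ _ H1 H2)) as H. revert H. apply Dk_ext.
  intros L _. split; [intros H; split; apply NNPP; tauto | tauto].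
Qed.

Lemma Dk_impl {Df} (HS : OMinimalStructure Df) k P Q : Dk Df k P -> Dk Df k Q -> Dk Df k (fun L => P L -> Q L).
Proof.
  intros H1 H2. apply Dk_not in H1; auto.
  pose proof (Dk_or HS _ _ _ H1 H2) as H. revert H. apply Dk_ext.
  intros L _. split; [tauto | intros H; destruct (classic (P L)); tauto].
Qed.

Lemma Dk_ex1 {Df} (HS : OMinimalStructure Df) k P : Dk Df (S k) P -> Dk Df k (fun L => exists r, P (L ++ [r])).
Proof.
  unfold Dk in *. intros H. apply om_proj in H; auto. revert H. apply Df_ext. intros x; cbv beta.
  split.
  - intros [r [Hl Hp]]. rewrite length_app in Hl; simpl in Hl. split; [lia | eauto].
  - intros [Hl [r Hp]]. exists r; rewrite length_app; simpl; split; [lia | auto].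
Qed.

Lemma Dk_all1 {Df} (HS : OMinimalStructure Df) k P : Dk Df (S k) P -> Dk Df k (fun L => forall r, P (L ++ [r])).
Proof.
  intros H. apply Dk_not in H; auto. apply Dk_ex1 in H; auto. apply Dk_not in H; auto.
  revert H. apply Dk_ext. intros L _. split.
  - intros H r. apply NNPP; intros Hn; apply H; eauto.
  - intros H [r Hr]; apply Hr, H.
Qed.

Lemma Dk_exn {Df} (HS : OMinimalStructure Df) j : forall k P, Dk Df (k + j)%nat P ->
  Dk Df k (fun L => exists z, length z = j /\ P (L ++ z)).
Proof.
  induction j as [|j IH]; intros k P H.
  - rewrite Nat.add_0_r in H. revert H. apply Dk_ext. intros L _. split.
    + intros Hp; exists []; rewrite app_nil_r; auto.
    + intros [z [Hz Hp]]; destruct z; [rewrite app_nil_r in Hp; auto | discriminate].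
  - rewrite Nat.add_succ_r in H. change (Dk Df (S k + j) P) in H.
    apply IH in H. apply Dk_ex1 in H; auto. revert H. apply Dk_ext. intros L _. split.
    + intros [r [z [Hz Hp]]]. exists (r :: z); split; [simpl; lia|]. rewrite <- app_assoc in Hp; exact Hp.
    + intros [z [Hz Hp]]. destruct z as [|r z]; [discriminate|]. exists r, z; split; [simpl in Hz; lia|].
      rewrite <- app_assoc; exact Hp.
Qed.

Lemma Dk_alln {Df} (HS : OMinimalStructure Df) j k P : Dk Df (k + j)%nat P ->
  Dk Df k (fun L => forall z, length z = j -> P (L ++ z)).
Proof.
  intros H. apply Dk_not in H; auto. apply Dk_exn in H; auto. apply Dk_not in H; auto.
  revert H. apply Dk_ext. intros L _. split.
  - intros H z Hz. apply NNPP; intros Hn; apply H; eauto.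
  - intros H [z [Hz Hn]]; apply Hn, H, Hz.
Qed.

Lemma Df_prefix {Df} (HS : OMinimalStructure Df) p A (HA : Df p A) : forall k,
  Df (k + p)%nat (fun L => exists pre z, length pre = k /\ L = pre ++ z /\ A z).
Proof.
  induction k as [|k IH].
  - revert HA. apply Df_ext. intros x; cbv beta; split.
    + intros Hx; exists [], x; auto.
    + intros [pre [z [Hp [-> Hz]]]]. destruct pre; [auto | discriminate].
  - apply om_prodl in IH; auto. revert IH. apply Df_ext. intros x; cbv beta; split.
    + intros [r [z [-> [pre [w [Hp [-> Hw]]]]]]]. exists (r :: pre), w; simpl; auto.
    + intros [pre [z [Hp [-> Hz]]]]. destruct pre as [|r pre]; [discriminate|].
      exists r, (pre ++ z); split; auto. exists pre, z; simpl in Hp; auto.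
Qed.

Lemma Df_suffix {Df} (HS : OMinimalStructure Df) p A (HA : Df p A) : forall q,
  Df (p + q)%nat (fun L => exists z post, length post = q /\ L = z ++ post /\ A z).
Proof.
  induction q as [|q IH].
  - rewrite Nat.add_0_r. revert HA. apply Df_ext. intros x; cbv beta; split.
    + intros Hx; exists x, []; rewrite app_nil_r; auto.
    + intros [z [post [Hp [-> Hz]]]]. destruct post; [rewrite app_nil_r; auto | discriminate].
  - rewrite Nat.add_succ_r. apply om_prodr in IH; auto. revert IH. apply Df_ext. intros x; cbv beta; split.
    + intros [w [r [-> [z [post [Hp [-> Hz]]]]]]]. exists z, (post ++ [r]).
      rewrite length_app, <- app_assoc; simpl; split; [lia | auto].
    + intros [z [post [Hp [-> Hz]]]]. destruct (exists_last (l:=post)) as [post' [r Er]].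
      { intros E; subst; discriminate. }
      subst post. exists (z ++ post'), r. rewrite app_assoc; split; auto.
      exists z, post'. rewrite length_app in Hp; simpl in Hp; split; [lia | auto].
Qed.

Lemma Dk_diag_lt {Df} (HS : OMinimalStructure Df) K i j : (i < j)%nat -> (j < K)%nat ->
  Dk Df K (fun L => nth i L 0 = nth j L 0).
Proof.
  intros Hij HjK.
  pose proof (om_diag _ HS (j - i + 1) ltac:(lia)) as H0.
  pose proof (Df_prefix HS _ _ H0 i) as H1.
  pose proof (Df_suffix HS _ _ H1 (K - j - 1)) as H2.
  replace (i + (j - i + 1) + (K - j - 1))%nat with K in H2 by lia.
  apply Df_Dk in H2; auto. revert H2. apply Dk_ext. intros L HL. split.
  - intros [z [post [Hpost [-> [pre [w [Hpre [-> [Hw Hd]]]]]]]]].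
    rewrite !length_app in HL.
    rewrite <- app_assoc. rewrite (app_nth2 pre) by lia. rewrite (app_nth2 pre) by lia.
    rewrite !app_nth1 by lia. rewrite Hpre. replace (i - i)%nat with 0%nat by lia.
    replace (j - i)%nat with (j - i + 1 - 1)%nat by lia. exact Hd.
  - intros Heq. exists (firstn (j+1) L), (skipn (j+1) L). rewrite length_skipn, firstn_skipn.
    split; [lia|]. split; auto.
    exists (firstn i (firstn (j+1) L)), (skipn i (firstn (j+1) L)). rewrite firstn_skipn.
    rewrite length_firstn, length_skipn, length_firstn. split; [lia|]. split; auto. split; [lia|].
    rewrite !nth_skipn, !nth_firstn. replace (i + 0)%nat with i by lia.
    replace (i + (j - i + 1 - 1))%nat with j by lia.
    destruct (Nat.ltb_spec i (j+1)); [|lia]. destruct (Nat.ltb_spec j (j+1)); [|lia]. auto.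
Qed.

Lemma Dk_diag {Df} (HS : OMinimalStructure Df) K i j : (i < K)%nat -> (j < K)%nat ->
  Dk Df K (fun L => nth i L 0 = nth j L 0).
Proof.
  intros Hi Hj. destruct (Nat.lt_trichotomy i j) as [H|[H|H]].
  - apply Dk_diag_lt; auto.
  - subst. eapply Dk_ext; [|apply Dk_true; auto]. intros; simpl; tauto.
  - eapply Dk_ext; [|apply (Dk_diag_lt HS K j i); auto]. intros; split; auto.
Qed.

Definition blk (L : list R) i p := map (fun t => nth t L 0) (seq i p).

Lemma length_blk L i p : length (blk L i p) = p.
Proof. unfold blk; now rewrite length_map, length_seq. Qed.

Lemma nth_map_d {A B} (f : A -> B) (l : list A) d db j : (j < length l)%nat -> nth j (map f l) db = f (nth j l d).
Proof.
  revert j; induction l as [|x l IH]; intros j H; simpl in *; [lia|]. destruct j; auto. apply IH; lia.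
Qed.

Lemma nth_blk L i p j : (j < p)%nat -> nth j (blk L i p) 0 = nth (i + j) L 0.
Proof.
  intros H. unfold blk. rewrite nth_map_d with (d := 0%nat) by (rewrite length_seq; auto).
  rewrite seq_nth; auto.
Qed.

Lemma blk_ext L1 L2 i p : (forall j, (j < p)%nat -> nth (i + j) L1 0 = nth (i + j) L2 0) -> blk L1 i p = blk L2 i p.
Proof.
  intros H. apply nth_ext with 0 0; rewrite ?length_blk; auto.
  intros j Hj. rewrite !nth_blk; auto.
Qed.

Lemma blk_app L z : blk (L ++ z) (length L) (length z) = z.
Proof.
  apply nth_ext with 0 0; rewrite ?length_blk; auto.
  intros j Hj. rewrite nth_blk by auto. apply app_nth2_plus.
Qed.

Lemma blk_app_l L z i p : (i + p <= length L)%nat -> blk (L ++ z) i p = blk L i p.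
Proof.
  intros H. apply blk_ext. intros j Hj. apply app_nth1; lia.
Qed.

Lemma blk_app_r L z i p : (length L <= i)%nat -> blk (L ++ z) i p = blk z (i - length L) p.
Proof.
  intros H. apply nth_ext with 0 0; rewrite ?length_blk; auto.
  intros j Hj. rewrite !nth_blk by auto. rewrite app_nth2 by lia. f_equal; lia.
Qed.

Lemma blk_full L k p : length L = (k + p)%nat -> blk L k p = skipn k L.
Proof.
  intros H. rewrite <- (firstn_skipn k L) at 1.
  rewrite blk_app_r by (rewrite length_firstn; lia). rewrite length_firstn.
  replace (k - Nat.min k (length L))%nat with 0%nat by lia.
  replace p with (length (skipn k L)) by (rewrite length_skipn; lia).
  exact (blk_app [] (skipn k L)).
Qed.

Inductive tm := TV (i : nat) | TC (c : R) | TAdd (a b : tm) | TMul (a b : tm).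

Fixpoint teval (L : list R) (t : tm) : R :=
  match t with
  | TV i => nth i L 0
  | TC c => c
  | TAdd a b => teval L a + teval L b
  | TMul a b => teval L a * teval L b
  end.

Fixpoint tok (k : nat) (t : tm) : Prop :=
  match t with
  | TV i => (i < k)%nat
  | TC _ => True
  | TAdd a b => tok k a /\ tok k b
  | TMul a b => tok k a /\ tok k b
  end.

Lemma tok_mono k k' t : (k <= k')%nat -> tok k t -> tok k' t.
Proof. induction t; simpl; intuition lia. Qed.

Lemma teval_app L z k t : (k <= length L)%nat -> tok k t -> teval (L ++ z) t = teval L t.
Proof.
  intros Hk. induction t; simpl; intros H.
  - apply app_nth1; lia.
  - auto.
  - destruct H; rewrite IHt1, IHt2; auto.
  - destruct H; rewrite IHt1, IHt2; auto.
Qed.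

Lemma reindex_core {Df} (HS : OMinimalStructure Df) (A : list R -> Prop) p k (F : list R -> list R) :
  Df p A -> (forall L, length (F L) = p) -> (forall L z, length L = k -> F (L ++ z) = F L) ->
  Dk Df (k + p)%nat (fun L => blk L k p = F L) -> Dk Df k (fun L => A (F L)).
Proof.
  intros HA HF HFapp HE.
  assert (H1 : Dk Df (k + p)%nat (fun L => A (blk L k p))).
  { pose proof (Df_prefix HS _ _ HA k) as H. apply Df_Dk in H; auto. revert H. apply Dk_ext.
    intros L HL. split.
    - intros [pre [z [Hpre [-> Hz]]]]. pose proof (om_sub _ HS _ _ HA _ Hz) as Hzl.
      rewrite <- Hpre, <- Hzl, blk_app; auto.
    - intros Ha. exists (firstn k L), (skipn k L). rewrite length_firstn, firstn_skipn.
      split; [lia|]. split; auto. rewrite <- (blk_full L k p); auto. }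
  pose proof (Dk_exn HS p k _ (Dk_and HS _ _ _ H1 HE)) as H. revert H. apply Dk_ext.
  intros L HL. split.
  - intros [z [Hz [Ha Hb]]]. rewrite <- HL, <- Hz, blk_app in Ha, Hb. rewrite HFapp in Hb; auto.
    subst; auto.
  - intros Ha. exists (F L). split; auto. rewrite <- HL, <- (HF L), blk_app, HFapp; auto.
Qed.

Lemma conj_atoms {Df} (HS : OMinimalStructure Df) K (Q : tm -> Prop)
  (Hat : forall i t, (i < K)%nat -> Q t -> Dk Df K (fun L => nth i L 0 = teval L t)) :
  forall ts off, Forall Q ts -> (off + length ts <= K)%nat ->
  Dk Df K (fun L => forall j, (j < length ts)%nat -> nth (off + j) L 0 = teval L (nth j ts (TC 0))).
Proof.
  induction ts as [|t ts IH]; intros off HQ Hlen.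
  - eapply Dk_ext; [|apply Dk_true; auto]. intros L _; simpl; split; auto; intros _ j Hj; lia.
  - inversion HQ; subst. simpl in Hlen.
    pose proof (Dk_and HS _ _ _ (Hat off t ltac:(lia) H1) (IH (S off) H2 ltac:(lia))) as H.
    revert H. apply Dk_ext. intros L _. split.
    + intros [Ha Hb] j Hj. destruct j as [|j].
      * rewrite Nat.add_0_r; auto.
      * simpl. replace (off + S j)%nat with (S off + j)%nat by lia. apply Hb. simpl in Hj; lia.
    + intros H. split.
      * specialize (H 0%nat ltac:(simpl; lia)). rewrite Nat.add_0_r in H; auto.
      * intros j Hj. specialize (H (S j) ltac:(simpl; lia)). replace (S off + j)%nat with (off + S j)%nat by lia. auto.
Qed.

Lemma reindex_tm {Df} (HS : OMinimalStructure Df) (Q : tm -> Prop) (A : list R -> Prop) (ts : list tm) k :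
  (forall i t, (i < k + length ts)%nat -> Q t -> Dk Df (k + length ts)%nat (fun L => nth i L 0 = teval L t)) ->
  Df (length ts) A -> Forall Q ts -> (forall t, Q t -> tok k t) ->
  Dk Df k (fun L => A (map (teval L) ts)).
Proof.
  intros Hat HA HQ Htok.
  apply (reindex_core HS A (length ts) k (fun L => map (teval L) ts)); auto.
  - intros L; apply length_map.
  - intros L z HL. apply map_ext_in. intros t Ht. apply teval_app with k; [lia|].
    apply Htok. rewrite Forall_forall in HQ; auto.
  - pose proof (conj_atoms HS _ Q Hat ts k HQ ltac:(lia)) as H. revert H. apply Dk_ext.
    intros L HL. split.
    + intros H. apply nth_ext with 0 0; rewrite ?length_blk, ?length_map; auto.
      intros j Hj. rewrite nth_blk by auto. rewrite H by auto.
      change 0 with (teval L (TC 0)) at 2. rewrite map_nth; auto.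
    + intros H j Hj. rewrite <- nth_blk with (p := length ts) by auto. rewrite H.
      change 0 with (teval L (TC 0)) at 1. rewrite map_nth; auto.
Qed.

Definition isvar k t := exists i, t = TV i /\ (i < k)%nat.

Lemma reindex_var {Df} (HS : OMinimalStructure Df) (A : list R -> Prop) (ts : list tm) k :
  Df (length ts) A -> Forall (isvar k) ts -> Dk Df k (fun L => A (map (teval L) ts)).
Proof.
  intros HA HQ. apply (reindex_tm HS (isvar k)); auto.
  - intros i t Hi [i' [-> Hi']]. simpl. apply Dk_diag; auto; lia.
  - intros t [i [-> Hi]]; simpl; auto.
Qed.

Lemma nth_app_last L r : nth (length L) (L ++ [r]) 0 = r.
Proof. rewrite app_nth2 by lia. rewrite Nat.sub_diag; reflexivity. Qed.

Lemma Dk_binop {Df} (HS : OMinimalStructure Df) (op : R -> R -> R) (K j : nat) t1 t2 :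
  Df 3%nat (fun x => exists a b, x = [a; b; op a b]) ->
  (j < K)%nat ->
  Dk Df (S (S K)) (fun L => nth K L 0 = teval L t1) ->
  Dk Df (S (S K)) (fun L => nth (S K) L 0 = teval L t2) ->
  tok K t1 -> tok K t2 ->
  Dk Df K (fun L => nth j L 0 = op (teval L t1) (teval L t2)).
Proof.
  intros Hop Hj H1 H2 Ht1 Ht2.
  assert (H3 : Dk Df (S (S K)) (fun L => (fun x => exists a b, x = [a; b; op a b]) (map (teval L) [TV K; TV (S K); TV j]))).
  { apply (reindex_var HS (fun x => exists a b, x = [a; b; op a b]) [TV K; TV (S K); TV j]); auto.
    repeat constructor; eexists; split; eauto; lia. }
  pose proof (Dk_and HS _ _ _ H1 (Dk_and HS _ _ _ H2 H3)) as H.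
  apply Dk_ex1 in H; auto. apply Dk_ex1 in H; auto. revert H. apply Dk_ext. intros L HL.
  simpl.
  assert (E1 : forall r1 r2, nth K ((L ++ [r1]) ++ [r2]) 0 = r1).
  { intros. rewrite app_nth1 by (rewrite length_app; simpl; lia). rewrite <- HL. apply nth_app_last. }
  assert (E2 : forall r1 r2, nth (S K) ((L ++ [r1]) ++ [r2]) 0 = r2).
  { intros. replace (S K) with (length (L ++ [r1])) by (rewrite length_app; simpl; lia). apply nth_app_last. }
  assert (E3 : forall r1 r2, nth j ((L ++ [r1]) ++ [r2]) 0 = nth j L 0).
  { intros. rewrite !app_nth1; auto; rewrite ?length_app; simpl; lia. }
  assert (E4 : forall r1 r2 t, tok K t -> teval ((L ++ [r1]) ++ [r2]) t = teval L t).
  { intros. rewrite <- app_assoc. apply teval_app with K; auto; lia. }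
  split.
  - intros [r1 [r2 [Ha [Hb [a [b Hc]]]]]]. rewrite E1, E4 in Ha by auto. rewrite E2, E4 in Hb by auto.
    rewrite E1, E2, E3 in Hc. injection Hc; intros -> -> ->. congruence.
  - intros He. exists (teval L t1), (teval L t2). rewrite E1, E2, E3, !E4 by auto.
    split; auto. split; auto. exists (teval L t1), (teval L t2). rewrite He; auto.
Qed.

Lemma Dk_termeq {Df} (HS : OMinimalStructure Df) : forall t K j, (j < K)%nat -> tok K t ->
  Dk Df K (fun L => nth j L 0 = teval L t).
Proof.
  induction t as [i|c|t1 IH1 t2 IH2|t1 IH1 t2 IH2]; intros K j Hj Ht; simpl in Ht.
  - apply Dk_diag; auto.
  - pose proof (reindex_var HS (fun x => x = [c]) [TV j] K (om_point _ HS c) ltac:(repeat constructor; eexists; split; eauto)) as H.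
    revert H. apply Dk_ext. intros L _. simpl. split; [intros H; injection H; auto | intros ->; auto].
  - destruct Ht. apply (Dk_binop HS Rplus K j t1 t2 (om_add _ HS) Hj); auto.
    + apply IH1; [lia | apply tok_mono with K; auto].
    + apply IH2; [lia | apply tok_mono with K; auto].
  - destruct Ht. apply (Dk_binop HS Rmult K j t1 t2 (om_mul _ HS) Hj); auto.
    + apply IH1; [lia | apply tok_mono with K; auto].
    + apply IH2; [lia | apply tok_mono with K; auto].
Qed.

Lemma reindex_gen {Df} (HS : OMinimalStructure Df) (A : list R -> Prop) (ts : list tm) k :
  Df (length ts) A -> Forall (tok k) ts -> Dk Df k (fun L => A (map (teval L) ts)).
Proof.
  intros HA HQ. apply (reindex_tm HS (tok k)); auto.
  intros i t Hi Ht. apply Dk_termeq; auto. apply tok_mono with k; auto; lia.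
Qed.

Lemma Dk_lt {Df} (HS : OMinimalStructure Df) K t1 t2 : tok K t1 -> tok K t2 ->
  Dk Df K (fun L => teval L t1 < teval L t2).
Proof.
  intros H1 H2.
  pose proof (reindex_gen HS _ [t1; t2] K (om_lt _ HS) ltac:(repeat constructor; auto)) as H.
  revert H. apply Dk_ext. intros L _; simpl. split.
  - intros [a [b [E Hab]]]. injection E; intros -> ->; auto.
  - intros Hl. eauto.
Qed.

Lemma Dk_le {Df} (HS : OMinimalStructure Df) K t1 t2 : tok K t1 -> tok K t2 ->
  Dk Df K (fun L => teval L t1 <= teval L t2).
Proof.
  intros H1 H2. pose proof (Dk_not HS _ _ (Dk_lt HS K t2 t1 H2 H1)) as H. revert H.
  apply Dk_ext. intros L _; split; intros; lra.
Qed.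

Lemma Dk_eq {Df} (HS : OMinimalStructure Df) K t1 t2 : tok K t1 -> tok K t2 ->
  Dk Df K (fun L => teval L t1 = teval L t2).
Proof.
  intros H1 H2. pose proof (Dk_and HS _ _ _ (Dk_le HS K t1 t2 H1 H2) (Dk_le HS K t2 t1 H2 H1)) as H. revert H.
  apply Dk_ext. intros L _; split; intros; lra.
Qed.

Definition sumsq (p q : list R) : R :=
  fold_right Rplus 0 (map (fun pr => (fst pr - snd pr) ^ 2) (combine p q)).

Definition Dle (m : nat) (G : list R -> Prop) (y x : list R) (s : R) : Prop :=
  forall w, 1 < w * s -> exists z, length z = m /\ G (z ++ y) /\ sumsq x z < w * w.

Definition goods (m n : nat) (G : list R -> Prop) (a y : list R) (s t : R) : Prop :=
  0 < t /\ t <= 1 /\ forall x, length x = m -> forall v, length v = n -> G (x ++ v) ->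
    sumsq x a < 1 -> sumsq v y < t * t -> Dle m G y x s.

Definition sq t := TMul t t.
Definition dif t1 t2 := TAdd t1 (TMul (TC (-1)) t2).
Fixpoint sqd (l1 l2 : list tm) : tm :=
  match l1, l2 with
  | t1 :: l1', t2 :: l2' => TAdd (sq (dif t1 t2)) (sqd l1' l2')
  | _, _ => TC 0
  end.

Lemma teval_sqd L l1 : forall l2, teval L (sqd l1 l2) = sumsq (map (teval L) l1) (map (teval L) l2).
Proof.
  induction l1 as [|t1 l1 IH]; intros [|t2 l2]; simpl; auto.
  rewrite IH. unfold sumsq; simpl. ring.
Qed.

Lemma tok_sqd K l1 : forall l2, Forall (tok K) l1 -> Forall (tok K) l2 -> tok K (sqd l1 l2).
Proof.
  induction l1 as [|t1 l1 IH]; intros [|t2 l2] H1 H2; simpl; auto.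
  inversion H1; inversion H2; subst. repeat split; auto.
Qed.

Definition vs i p := map TV (seq i p).
Definition cs (a : list R) := map TC a.

Lemma map_vs L i p : map (teval L) (vs i p) = blk L i p.
Proof. unfold vs, blk. rewrite map_map. reflexivity. Qed.

Lemma map_cs L a : map (teval L) (cs a) = a.
Proof. unfold cs. rewrite map_map. simpl. apply map_id. Qed.

Lemma tok_vs K i p : (i + p <= K)%nat -> Forall (tok K) (vs i p).
Proof.
  intros H. unfold vs. apply Forall_map. apply Forall_forall. intros x Hx.
  apply in_seq in Hx. simpl; lia.
Qed.

Lemma tok_cs K a : Forall (tok K) (cs a).
Proof. unfold cs. apply Forall_map. apply Forall_forall. intros; simpl; auto. Qed.

Lemma length_vs i p : length (vs i p) = p.
Proof. unfold vs; now rewrite length_map, length_seq. Qed.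
Lemma length_cs a : length (cs a) = length a.
Proof. unfold cs; now rewrite length_map. Qed.

Lemma blk_pre L X W i p : length L = i -> length X = p -> blk (L ++ X ++ W) i p = X.
Proof.
  intros HL HX. rewrite blk_app_r by lia. replace (i - length L)%nat with 0%nat by lia.
  rewrite blk_app_l by lia. subst p. exact (blk_app [] X).
Qed.

Lemma Dk_G2 {Df} (HS : OMinimalStructure Df) m n G (HG : Df (m + n)%nat G) K i j :
  (i + m <= K)%nat -> (j + n <= K)%nat -> Dk Df K (fun L => G (blk L i m ++ blk L j n)).
Proof.
  intros Hi Hj.
  assert (HG' : Df (length (vs i m ++ vs j n)) G) by (rewrite length_app, !length_vs; auto).
  pose proof (reindex_gen HS G _ K HG' ltac:(apply Forall_app; split; apply tok_vs; auto)) as H.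
  revert H. apply Dk_ext. intros L _. rewrite map_app, !map_vs. tauto.
Qed.

Lemma Dk_Gy {Df} (HS : OMinimalStructure Df) m n G (HG : Df (m + n)%nat G) (y : list R) (Hy : length y = n) K i :
  (i + m <= K)%nat -> Dk Df K (fun L => G (blk L i m ++ y)).
Proof.
  intros Hi.
  assert (HG' : Df (length (vs i m ++ cs y)) G) by (rewrite length_app, length_vs, length_cs, Hy; auto).
  pose proof (reindex_gen HS G _ K HG' ltac:(apply Forall_app; split; [apply tok_vs; auto | apply tok_cs])) as H.
  revert H. apply Dk_ext. intros L _. rewrite map_app, map_vs, map_cs. tauto.
Qed.

Lemma Dk_sumsq {Df} (HS : OMinimalStructure Df) K l1 l2 t : Forall (tok K) l1 -> Forall (tok K) l2 -> tok K t ->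
  Dk Df K (fun L => sumsq (map (teval L) l1) (map (teval L) l2) < teval L t).
Proof.
  intros H1 H2 H3. pose proof (Dk_lt HS K _ _ (tok_sqd K l1 l2 H1 H2) H3) as H. revert H.
  apply Dk_ext. intros L _. rewrite teval_sqd. tauto.
Qed.

Lemma goods_def {Df} (HS : OMinimalStructure Df) m n G a y (HG : Df (m + n)%nat G)
  (Ha : length a = m) (Hy : length y = n) k is it : (is < k)%nat -> (it < k)%nat ->
  Dk Df k (fun L => goods m n G a y (nth is L 0) (nth it L 0)).
Proof.
  intros His Hit.
  set (K2 := (k + m + n)%nat). set (K3 := S K2). set (K4 := (K3 + m)%nat).
  assert (Q4 : Dk Df K4 (fun L => G (blk L K3 m ++ y) /\ sumsq (blk L k m) (blk L K3 m) < nth K2 L 0 * nth K2 L 0)).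
  { apply Dk_and; auto.
    - apply Dk_Gy with n; auto; unfold K4; lia.
    - pose proof (Dk_sumsq HS K4 (vs k m) (vs K3 m) (TMul (TV K2) (TV K2))
        ltac:(apply tok_vs; unfold K4, K3, K2; lia) ltac:(apply tok_vs; unfold K4; lia)
        ltac:(simpl; unfold K4, K3; lia)) as H.
      revert H. apply Dk_ext. intros L _. rewrite !map_vs. simpl. tauto. }
  assert (Q3 : Dk Df K3 (fun L => 1 < nth K2 L 0 * nth is L 0 ->
      exists Z, length Z = m /\ (G (blk (L ++ Z) K3 m ++ y) /\
         sumsq (blk (L ++ Z) k m) (blk (L ++ Z) K3 m) < nth K2 (L ++ Z) 0 * nth K2 (L ++ Z) 0))).
  { apply Dk_impl; auto.
    - pose proof (Dk_lt HS K3 (TC 1) (TMul (TV K2) (TV is)) I ltac:(simpl; unfold K3, K2; lia)) as H.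
      revert H. apply Dk_ext. intros L _. simpl. tauto.
    - apply (Dk_exn HS m K3 _ Q4). }
  assert (Q2 : Dk Df K2 (fun L => G (blk L k m ++ blk L (k + m) n) -> sumsq (blk L k m) a < 1 ->
      sumsq (blk L (k + m) n) y < nth it L 0 * nth it L 0 ->
      forall w, 1 < nth K2 (L ++ [w]) 0 * nth is (L ++ [w]) 0 ->
      exists Z, length Z = m /\ (G (blk ((L ++ [w]) ++ Z) K3 m ++ y) /\
         sumsq (blk ((L ++ [w]) ++ Z) k m) (blk ((L ++ [w]) ++ Z) K3 m) <
           nth K2 ((L ++ [w]) ++ Z) 0 * nth K2 ((L ++ [w]) ++ Z) 0))).
  { apply Dk_impl; auto. { apply Dk_G2; auto; unfold K2; try lia. }
    apply Dk_impl; auto.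
    { pose proof (Dk_sumsq HS K2 (vs k m) (cs a) (TC 1) ltac:(apply tok_vs; unfold K2; lia) (tok_cs _ _) I) as H.
      revert H. apply Dk_ext. intros L _. rewrite map_vs, map_cs. simpl. tauto. }
    apply Dk_impl; auto.
    { pose proof (Dk_sumsq HS K2 (vs (k + m) n) (cs y) (TMul (TV it) (TV it)) ltac:(apply tok_vs; unfold K2; lia) (tok_cs _ _)
         ltac:(simpl; unfold K2; lia)) as H.
      revert H. apply Dk_ext. intros L _. rewrite map_vs, map_cs. simpl. tauto. }
    apply (Dk_all1 HS K2 _ Q3). }
  pose proof (Dk_alln HS m k _ (Dk_alln HS n (k + m) _ Q2)) as Q1.
  pose proof (Dk_and HS _ _ _ (Dk_lt HS k (TC 0) (TV it) I ltac:(simpl; lia))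
               (Dk_and HS _ _ _ (Dk_le HS k (TV it) (TC 1) ltac:(simpl; lia) I) Q1)) as Q0.
  revert Q0. apply Dk_ext. intros L HL. simpl.
  assert (E1 : forall X V, length X = m -> blk ((L ++ X) ++ V) k m = X).
  { intros. rewrite <- app_assoc. apply blk_pre; auto. }
  assert (E2 : forall X V, length X = m -> length V = n -> blk ((L ++ X) ++ V) (k + m) n = V).
  { intros. replace (k + m)%nat with (length (L ++ X)) by (rewrite length_app; lia).
    rewrite <- H0. apply blk_app. }
  assert (E3 : forall W i, (i < k)%nat -> nth i (L ++ W) 0 = nth i L 0).
  { intros. apply app_nth1; lia. }
  assert (E4 : forall X V w W, length X = m -> length V = n -> nth K2 (((L ++ X) ++ V) ++ w :: W) 0 = w).
  { intros. replace K2 with (length ((L ++ X) ++ V)) by (rewrite !length_app; unfold K2; lia). apply nth_middle. }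
  assert (E5 : forall X V w Z, length X = m -> length V = n -> length Z = m ->
      blk ((((L ++ X) ++ V) ++ [w]) ++ Z) K3 m = Z).
  { intros. replace K3 with (length (((L ++ X) ++ V) ++ [w])) by (rewrite !length_app; simpl; unfold K3, K2; lia).
    rewrite <- H1 at 1. apply blk_app. }
  assert (E6 : forall X V w Z, length X = m -> blk ((((L ++ X) ++ V) ++ [w]) ++ Z) k m = X).
  { intros. rewrite <- !app_assoc. apply blk_pre; auto. }
  assert (E7 : forall X V w Z, length X = m -> length V = n -> nth K2 ((((L ++ X) ++ V) ++ [w]) ++ Z) 0 = w).
  { intros. rewrite <- (app_assoc _ [w] Z). simpl. apply E4; auto. }
  assert (E8 : forall X V W i, (i < k)%nat -> nth i (((L ++ X) ++ V) ++ W) 0 = nth i L 0).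
  { intros. rewrite <- !app_assoc. apply E3; auto. }
  assert (E9 : forall X V i, (i < k)%nat -> nth i ((L ++ X) ++ V) 0 = nth i L 0).
  { intros. rewrite <- !app_assoc. apply E3; auto. }
  unfold goods, Dle. split.
  - intros [H1 [H2 H3]]. split; auto. split; auto.
    intros X HX V HV HGv Hxa Hvy w Hw.
    specialize (H3 X HX V HV). rewrite E1, E2, E9 in H3 by auto.
    specialize (H3 HGv Hxa Hvy w). rewrite (E4 X V w []), (E8 X V [w]) in H3 by auto.
    destruct (H3 Hw) as [Z [HZ [HGZ HZs]]]. exists Z. rewrite E5 in HGZ, HZs by auto. rewrite E6, E7 in HZs by auto. auto.
  - intros [H1 [H2 H3]]. split; auto. split; auto.
    intros X HX V HV. rewrite E1, E2, E9 by auto. intros HGv Hxa Hvy w.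
    rewrite (E4 X V w []), (E8 X V [w]) by auto. intros Hw.
    destruct (H3 X HX V HV HGv Hxa Hvy w Hw) as [Z [HZ [HGZ HZs]]]. exists Z. split; auto.
    rewrite E5, E6, E7 by auto. auto.
Qed.

Definition islub m n G a y s p :=
  (forall t, goods m n G a y s t -> t <= p) /\ (forall q, q < p -> exists t, goods m n G a y s t /\ q < t).

Definition phi m n G a y s := epsilon (inhabits 0) (islub m n G a y s).

Definition fF m n G a y s := match Rlt_dec 0 s with left _ => / phi m n G a y s | right _ => 0 end.

Lemma islub_exists m n G a y s : (exists t, goods m n G a y s t) -> exists p, islub m n G a y s p.
Proof.
  intros Hex. destruct (completeness (goods m n G a y s)) as [p [Hub Hl]].
  - exists 1. intros t [_ [Ht _]]; auto.
  - auto.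
  - exists p. split; auto. intros q Hq. apply NNPP; intros Hn.
    assert (p <= q); [|lra]. apply Hl. intros t Ht. apply Rnot_lt_le. intros Hlt. apply Hn; eauto.
Qed.

Lemma islub_unique m n G a y s p1 p2 : islub m n G a y s p1 -> islub m n G a y s p2 -> p1 = p2.
Proof.
  intros [H1 H1'] [H2 H2']. destruct (Rtotal_order p1 p2) as [H|[H|H]]; auto.
  - destruct (H2' p1 H) as [t [Ht Hq]]. specialize (H1 t Ht). lra.
  - destruct (H1' p2 H) as [t [Ht Hq]]. specialize (H2 t Ht). lra.
Qed.

Lemma phi_spec m n G a y s : (exists t, goods m n G a y s t) ->
  islub m n G a y s (phi m n G a y s) /\ 0 < phi m n G a y s.
Proof.
  intros Hex. assert (H : islub m n G a y s (phi m n G a y s)).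
  { unfold phi. apply epsilon_spec. apply islub_exists; auto. }
  split; auto. destruct Hex as [t Ht]. pose proof (proj1 H t Ht). destruct Ht as [Ht _]. lra.
Qed.

Lemma graph_def {Df} (HS : OMinimalStructure Df) m n G a y (HG : Df (m + n)%nat G)
  (Ha : length a = m) (Hy : length y = n)
  (Hex : forall s, 0 < s -> exists t, goods m n G a y s t) :
  Df 2%nat (fun p => exists x, p = [x; fF m n G a y x]).
Proof.
  assert (P5 : Dk Df 5 (fun L => goods m n G a y (nth 0 L 0) (nth 4 L 0) /\ nth 3 L 0 < nth 4 L 0)).
  { apply Dk_and; auto. { apply goods_def; auto; lia. }
    pose proof (Dk_lt HS 5 (TV 3) (TV 4) ltac:(simpl; lia) ltac:(simpl; lia)) as H. exact H. }
  assert (P4b : Dk Df 4 (fun L => nth 3 L 0 < nth 2 L 0 -> exists t,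
       goods m n G a y (nth 0 (L ++ [t]) 0) (nth 4 (L ++ [t]) 0) /\ nth 3 (L ++ [t]) 0 < nth 4 (L ++ [t]) 0)).
  { apply Dk_impl; auto. { exact (Dk_lt HS 4 (TV 3) (TV 2) ltac:(simpl; lia) ltac:(simpl; lia)). }
    apply (Dk_ex1 HS 4 _ P5). }
  assert (P4a : Dk Df 4 (fun L => goods m n G a y (nth 0 L 0) (nth 3 L 0) -> nth 3 L 0 <= nth 2 L 0)).
  { apply Dk_impl; auto. { apply goods_def; auto; lia. }
    exact (Dk_le HS 4 (TV 3) (TV 2) ltac:(simpl; lia) ltac:(simpl; lia)). }
  assert (P3 : Dk Df 3 (fun L => (forall t, goods m n G a y (nth 0 (L ++ [t]) 0) (nth 3 (L ++ [t]) 0) -> nth 3 (L ++ [t]) 0 <= nth 2 (L ++ [t]) 0)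
      /\ (forall q, nth 3 (L ++ [q]) 0 < nth 2 (L ++ [q]) 0 -> exists t,
       goods m n G a y (nth 0 ((L ++ [q]) ++ [t]) 0) (nth 4 ((L ++ [q]) ++ [t]) 0) /\ nth 3 ((L ++ [q]) ++ [t]) 0 < nth 4 ((L ++ [q]) ++ [t]) 0)
      /\ teval L (TMul (TV 1) (TV 2)) = teval L (TC 1))).
  { apply Dk_and; auto. { apply (Dk_all1 HS 3 _ P4a). }
    apply Dk_and; auto. { apply (Dk_all1 HS 3 _ P4b). }
    apply Dk_eq; simpl; auto; lia. }
  assert (P2 : Dk Df 2 (fun L => (teval L (TV 0) <= teval L (TC 0) /\ teval L (TV 1) = teval L (TC 0)) \/
      (teval L (TC 0) < teval L (TV 0) /\ exists p,
      (forall t, goods m n G a y (nth 0 ((L ++ [p]) ++ [t]) 0) (nth 3 ((L ++ [p]) ++ [t]) 0) -> nth 3 ((L ++ [p]) ++ [t]) 0 <= nth 2 ((L ++ [p]) ++ [t]) 0)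
      /\ (forall q, nth 3 ((L ++ [p]) ++ [q]) 0 < nth 2 ((L ++ [p]) ++ [q]) 0 -> exists t,
       goods m n G a y (nth 0 (((L ++ [p]) ++ [q]) ++ [t]) 0) (nth 4 (((L ++ [p]) ++ [q]) ++ [t]) 0) /\ nth 3 (((L ++ [p]) ++ [q]) ++ [t]) 0 < nth 4 (((L ++ [p]) ++ [q]) ++ [t]) 0)
      /\ teval (L ++ [p]) (TMul (TV 1) (TV 2)) = teval (L ++ [p]) (TC 1)))).
  { apply Dk_or; auto.
    - apply Dk_and; auto; [apply Dk_le | apply Dk_eq]; simpl; auto; lia.
    - apply Dk_and; auto; [apply Dk_lt; simpl; auto; lia | apply (Dk_ex1 HS 2 _ P3)]. }
  unfold Dk in P2. revert P2. apply Df_ext. intros L. split.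
  - intros [HL H]. destruct L as [|s [|r [|]]]; simpl in HL; try discriminate.
    exists s. simpl in H. unfold fF. destruct (Rlt_dec 0 s) as [Hs|Hs].
    + destruct H as [[H _]|[_ [p [Hp1 [Hp2 Hp3]]]]]; [lra|].
      assert (Hl : islub m n G a y s p) by (split; auto).
      destruct (phi_spec m n G a y s (Hex s Hs)) as [Hl' Hpos].
      rewrite <- (islub_unique _ _ _ _ _ _ _ _ Hl Hl') in *.
      f_equal. f_equal. field_simplify_eq; [lra | lra].
    + destruct H as [[_ H]|[H _]]; [subst; auto | lra].
  - intros [s ->]. split; auto. simpl. unfold fF. destruct (Rlt_dec 0 s) as [Hs|Hs].
    + right. split; auto. destruct (phi_spec m n G a y s (Hex s Hs)) as [[Hl1 Hl2] Hpos].
      exists (phi m n G a y s). split; [|split]; auto. field. lra.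
    + left; lra.
Qed.

Lemma sumsq_cons h T l L : sumsq (h :: T) (l :: L) = (h - l) ^ 2 + sumsq T L.
Proof. reflexivity. Qed.

Lemma sumsq_nonneg p : forall q, 0 <= sumsq p q.
Proof.
  induction p as [|h p IH]; intros [|l q]; try (unfold sumsq; simpl; lra).
  rewrite sumsq_cons. specialize (IH q). pose proof (pow2_ge_0 (h - l)). lra.
Qed.

Lemma sumsq_nil_r p : sumsq p [] = 0.
Proof. destruct p; reflexivity. Qed.

Lemma sumsq_sym p : forall q, sumsq p q = sumsq q p.
Proof.
  induction p as [|h p IH]; intros [|l q]; try reflexivity.
  rewrite !sumsq_cons, IH. f_equal. ring.
Qed.

Lemma sumsq_app p1 : forall q1 p2 q2, length p1 = length q1 ->
  sumsq (p1 ++ p2) (q1 ++ q2) = sumsq p1 q1 + sumsq p2 q2.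
Proof.
  induction p1 as [|h p1 IH]; intros [|l q1] p2 q2 H; simpl in H; try discriminate.
  - simpl. unfold sumsq at 2; simpl. ring.
  - simpl. rewrite !sumsq_cons, IH by lia. ring.
Qed.

Lemma nat_arch eps : 0 < eps -> exists N : nat, / (INR N + 1) < eps.
Proof.
  intros He. destruct (archimed (/ eps)) as [H1 _].
  assert (Hp : (0 < up (/ eps))%Z). { apply lt_0_IZR. pose proof (Rinv_0_lt_compat eps He). lra. }
  exists (Z.to_nat (up (/ eps))). rewrite INR_IZR_INZ, Z2Nat.id by lia.
  assert (0 < / eps) by (apply Rinv_0_lt_compat; auto).
  rewrite <- (Rinv_inv eps) at 2. apply Rinv_lt_contravar; nra.
Qed.

Lemma strict_ge (f : nat -> nat) : (forall k, (f k < f (S k))%nat) -> forall k, (k <= f k)%nat.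
Proof. intros H k; induction k; [lia | specialize (H k); lia]. Qed.

Lemma strict_mono (f : nat -> nat) : (forall k, (f k < f (S k))%nat) -> forall a b, (a < b)%nat -> (f a < f b)%nat.
Proof.
  intros H a b Hab. induction b; [lia|]. destruct (Nat.eq_dec a b).
  - subst; auto.
  - specialize (H b). assert (f a < f b)%nat by (apply IHb; lia). lia.
Qed.

Lemma inv_mono (j k : nat) : (j <= k)%nat -> / (INR k + 1) <= / (INR j + 1).
Proof.
  intros H. apply Rinv_le_contravar; [pose proof (pos_INR j); lra|]. apply le_INR in H; lra.
Qed.

Lemma BW1 (u : nat -> R) c : (forall k, c - 1 <= u k <= c + 1) ->
  exists ph : nat -> nat, (forall k, (ph k < ph (S k))%nat) /\
    exists l, forall eps, 0 < eps -> exists N, forall k, (N <= k)%nat -> Rabs (u (ph k) - l) < eps.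
Proof.
  intros Hb. destruct (Bolzano_Weierstrass u (fun x => c - 1 <= x <= c + 1) (compact_P3 _ _) Hb) as [l Hl].
  assert (Hsel : forall N k : nat, exists p, (N <= p)%nat /\ Rabs (u p - l) < / (INR k + 1)).
  { intros N k. assert (Hpos : 0 < / (INR k + 1)) by (apply Rinv_0_lt_compat; pose proof (pos_INR k); lra).
    destruct (Hl (disc l (mkposreal _ Hpos)) N) as [p [Hp Hd]].
    - exists (mkposreal _ Hpos). intros z Hz; auto.
    - exists p; split; auto. }
  set (g := fun N k => proj1_sig (constructive_indefinite_description _ (Hsel N k))).
  assert (Hg : forall N k, (N <= g N k)%nat /\ Rabs (u (g N k) - l) < / (INR k + 1)).
  { intros N k. unfold g. destruct (constructive_indefinite_description _ (Hsel N k)); auto. }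
  pose (ph := fix f (k : nat) : nat := match k with 0%nat => g 0%nat 0%nat | S k' => g (S (f k')) (S k') end).
  exists ph. split.
  - intros k. simpl. destruct (Hg (S (ph k)) (S k)); lia.
  - exists l. intros eps He. destruct (nat_arch eps He) as [N HN]. exists N. intros k Hk.
    assert (Hk' : Rabs (u (ph k) - l) < / (INR k + 1)).
    { destruct k; simpl; [apply (Hg 0%nat 0%nat) | apply (Hg _ (S k))]. }
    pose proof (inv_mono _ _ Hk). lra.
Qed.

Lemma BWm m : forall (X : nat -> list R) A, length A = m -> (forall k, length (X k) = m) ->
  (forall k, sumsq (X k) A < 1) ->
  exists ph : nat -> nat, (forall k, (ph k < ph (S k))%nat) /\ exists L, length L = m /\
    forall eps, 0 < eps -> exists N, forall k, (N <= k)%nat -> sumsq (X (ph k)) L < eps.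
Proof.
  induction m as [|m IH]; intros X A HA HX Hb.
  - exists (fun k => k). split; [intros; lia|]. exists []. split; auto.
    intros eps He. exists 0%nat. intros k _. rewrite sumsq_nil_r. auto.
  - destruct A as [|a0 A]; [discriminate|]. simpl in HA.
    set (h := fun k => hd 0 (X k)). set (T := fun k => tl (X k)).
    assert (EX : forall k, X k = h k :: T k).
    { intros k. unfold h, T. specialize (HX k). destruct (X k); [discriminate|reflexivity]. }
    assert (HT : forall k, length (T k) = m).
    { intros k. specialize (HX k). rewrite EX in HX. simpl in HX; lia. }
    assert (Hb2 : forall k, (h k - a0) ^ 2 + sumsq (T k) A < 1).
    { intros k. rewrite <- sumsq_cons, <- EX. auto. }
    assert (Hh : forall k, a0 - 1 <= h k <= a0 + 1).
    { intros k. specialize (Hb2 k). pose proof (sumsq_nonneg (T k) A). nra. }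
    destruct (BW1 h a0 Hh) as [ph1 [Hph1 [l Hl]]].
    destruct (IH (fun k => T (ph1 k)) A ltac:(lia) (fun k => HT _)) as [ph2 [Hph2 [L [HL HconvL]]]].
    { intros k. specialize (Hb2 (ph1 k)). pose proof (pow2_ge_0 (h (ph1 k) - a0)). lra. }
    exists (fun k => ph1 (ph2 k)). split.
    { intros k. apply strict_mono; auto. }
    exists (l :: L). split; [simpl; lia|].
    intros eps He. set (e' := Rmin 1 (eps / 2)).
    assert (He' : 0 < e') by (apply Rmin_pos; lra).
    destruct (Hl e' He') as [N1 HN1]. destruct (HconvL (eps / 2) ltac:(lra)) as [N2 HN2].
    exists (Nat.max N1 N2). intros k Hk. rewrite EX, sumsq_cons.
    assert (H1 : Rabs (h (ph1 (ph2 k)) - l) < e').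
    { apply HN1. pose proof (strict_ge _ Hph2 k). lia. }
    assert (H2 : sumsq (T (ph1 (ph2 k))) L < eps / 2) by (apply HN2; lia).
    assert (H3 : (h (ph1 (ph2 k)) - l) ^ 2 < eps / 2).
    { assert (e' <= 1) by apply Rmin_l. assert (e' <= eps / 2) by apply Rmin_r.
      rewrite <- Rsqr_pow2. rewrite Rsqr_abs. unfold Rsqr. pose proof (Rabs_pos (h (ph1 (ph2 k)) - l)). nra. }
    lra.
Qed.

Lemma edist_sumsq x z : edist x z = sqrt (sumsq x z).
Proof. reflexivity. Qed.

Lemma sqrt_lt_of p w : 0 <= p -> 0 < w -> p < w * w -> sqrt p < w.
Proof.
  intros Hp Hw H. rewrite <- (sqrt_square w) by lra. apply sqrt_lt_1_alt; lra.
Qed.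

Lemma inv_sq_lt s w : 0 < s -> 1 < w * s -> / (s * s) < w * w.
Proof.
  intros Hs H. assert (0 < w) by nra.
  apply (Rmult_lt_reg_l (s * s)); [nra|]. rewrite Rinv_r by nra. nra.
Qed.

Lemma goods_exists m n G a y (HGcl : closed_in (m + n) G) (Ha : length a = m) (Hy : length y = n) s :
  0 < s -> exists t, goods m n G a y s t.
Proof.
  intros Hs. apply NNPP. intros Hn.
  assert (Hseq : forall k : nat, exists p : list R * list R,
    length (fst p) = m /\ length (snd p) = n /\ G (fst p ++ snd p) /\ sumsq (fst p) a < 1 /\
    sumsq (snd p) y < / (INR k + 1) * / (INR k + 1) /\
    (forall z, length z = m -> G (z ++ y) -> / (s * s) < sumsq (fst p) z)).
  { intros k. set (t := / (INR k + 1)).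
    assert (Ht0 : 0 < t) by (apply Rinv_0_lt_compat; pose proof (pos_INR k); lra).
    assert (Ht1 : t <= 1).
    { unfold t. rewrite <- Rinv_1. apply Rinv_le_contravar; [lra|]. pose proof (pos_INR k); lra. }
    assert (H : ~ (forall x, length x = m -> forall v, length v = n -> G (x ++ v) ->
       sumsq x a < 1 -> sumsq v y < t * t -> Dle m G y x s)).
    { intros H. apply Hn. exists t. split; auto. }
    apply not_all_ex_not in H. destruct H as [x H]. apply imply_to_and in H. destruct H as [Hx H].
    apply not_all_ex_not in H. destruct H as [v H]. apply imply_to_and in H. destruct H as [Hv H].
    apply imply_to_and in H. destruct H as [HG H]. apply imply_to_and in H. destruct H as [Hxa H].
    apply imply_to_and in H. destruct H as [Hvy H].
    unfold Dle in H. apply not_all_ex_not in H. destruct H as [w H]. apply imply_to_and in H. destruct H as [Hw H].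
    exists (x, v). simpl. repeat split; auto.
    intros z Hz HGz. apply Rnot_le_lt. intros Hle. apply H. exists z. repeat split; auto.
    pose proof (inv_sq_lt s w Hs Hw). lra. }
  set (X := fun k => fst (proj1_sig (constructive_indefinite_description _ (Hseq k)))).
  set (V := fun k => snd (proj1_sig (constructive_indefinite_description _ (Hseq k)))).
  assert (HXV : forall k, length (X k) = m /\ length (V k) = n /\ G (X k ++ V k) /\ sumsq (X k) a < 1 /\
    sumsq (V k) y < / (INR k + 1) * / (INR k + 1) /\
    (forall z, length z = m -> G (z ++ y) -> / (s * s) < sumsq (X k) z)).
  { intros k. unfold X, V. destruct (constructive_indefinite_description _ (Hseq k)) as [p Hp]. exact Hp. }
  destruct (BWm m X a Ha (fun k => proj1 (HXV k)) (fun k => proj1 (proj2 (proj2 (proj2 (HXV k))))))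
    as [ph [Hph [xs [Hxs Hconv]]]].
  assert (HGs : G (xs ++ y)).
  { apply HGcl. { rewrite length_app; lia. }
    intros eps He.
    destruct (Hconv (eps * eps / 2) ltac:(nra)) as [N1 HN1].
    set (e' := Rmin 1 (eps * eps / 2)).
    assert (He' : 0 < e') by (apply Rmin_pos; nra).
    destruct (nat_arch e' He') as [N2 HN2].
    set (k := Nat.max N1 N2).
    exists (X (ph k) ++ V (ph k)). destruct (HXV (ph k)) as [HXl [HVl [HG [_ [HVy _]]]]].
    split; auto. rewrite edist_sumsq, sumsq_app by lia.
    assert (H1 : sumsq xs (X (ph k)) < eps * eps / 2) by (rewrite sumsq_sym; apply HN1; lia).
    assert (H2 : sumsq y (V (ph k)) < eps * eps / 2).
    { rewrite sumsq_sym. pose proof (inv_mono _ _ (strict_ge _ Hph k)).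
      pose proof (inv_mono N2 k ltac:(lia)).
      assert (Hi : 0 < / (INR (ph k) + 1)) by (apply Rinv_0_lt_compat; pose proof (pos_INR (ph k)); lra).
      assert (e' <= 1) by apply Rmin_l. assert (e' <= eps * eps / 2) by apply Rmin_r.
      assert (/ (INR (ph k) + 1) < e') by lra. nra. }
    apply sqrt_lt_of; [|lra|lra]. pose proof (sumsq_nonneg xs (X (ph k))). pose proof (sumsq_nonneg y (V (ph k))). lra. }
  assert (Hss : 0 < / (s * s)) by (apply Rinv_0_lt_compat; nra).
  destruct (Hconv _ Hss) as [N HN]. specialize (HN N (le_n _)).
  destruct (HXV (ph N)) as [_ [_ [_ [_ [_ Hfar]]]]]. specialize (Hfar xs Hxs HGs). lra.
Qed.

Lemma Rinf_glb (E : R -> Prop) : (exists r, E r) -> (forall r, E r -> 0 <= r) -> is_glb E (Rinf E).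
Proof.
  intros Hne Hlb. unfold Rinf. apply epsilon_spec.
  destruct (completeness (fun r => E (- r))) as [l [Hub Hl]].
  - exists 0. intros r Hr. specialize (Hlb _ Hr). lra.
  - destruct Hne as [r Hr]. exists (- r). rewrite Ropp_involutive; auto.
  - exists (- l). split.
    + intros r Hr. assert (- r <= l); [apply Hub; rewrite Ropp_involutive; auto | lra].
    + intros b Hb. assert (l <= - b); [|lra]. apply Hl. intros r Hr. specialize (Hb _ Hr). lra.
Qed.

Lemma dist_props (S : list R -> Prop) x : (exists z, S z) ->
  is_glb (fun r => exists z, S z /\ r = edist x z) (dist_to x S).
Proof.
  intros [z Hz]. apply Rinf_glb.
  - exists (edist x z); eauto.
  - intros r [z' [_ ->]]. apply sqrt_pos.
Qed.

Lemma dist_le (S : list R -> Prop) x z : S z -> dist_to x S <= edist x z.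
Proof.
  intros Hz. destruct (dist_props S x ltac:(eauto)) as [H _]. apply H; eauto.
Qed.

Lemma dist_nonneg (S : list R -> Prop) x : (exists z, S z) -> 0 <= dist_to x S.
Proof.
  intros Hne. destruct (dist_props S x Hne) as [_ H]. apply H. intros r [z [_ ->]]. apply sqrt_pos.
Qed.

Lemma dist_le_u (S : list R -> Prop) x u : (exists z, S z) ->
  (forall w, u < w -> exists z, S z /\ edist x z < w) -> dist_to x S <= u.
Proof.
  intros Hne H. apply Rnot_lt_le. intros Hlt.
  destruct (H ((u + dist_to x S) / 2) ltac:(lra)) as [z [Hz Hd]].
  pose proof (dist_le S x z Hz). lra.
Qed.

Lemma key_lemma m n G a y (Hex : forall s, 0 < s -> exists t, goods m n G a y s t)
  (Ha : length a = m) (Hay : G (a ++ y)) s t x v :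
  0 < s -> 0 <= t -> t < phi m n G a y s -> length x = m -> length v = n -> G (x ++ v) ->
  sumsq x a < 1 -> sumsq v y <= t * t ->
  dist_to x (fun z => length z = m /\ G (z ++ y)) <= / s.
Proof.
  intros Hs Ht Htp Hx Hv HG Hxa Hvy.
  destruct (phi_spec m n G a y s (Hex s Hs)) as [[_ Hl] _].
  destruct (Hl t Htp) as [t' [[Ht'0 [_ Hgood]] Htt']].
  assert (Hvy' : sumsq v y < t' * t') by nra.
  specialize (Hgood x Hx v Hv HG Hxa Hvy').
  apply dist_le_u; [exists a; auto|]. intros w Hw.
  assert (Hw0 : 0 < w). { pose proof (Rinv_0_lt_compat s Hs). lra. }
  destruct (Hgood w) as [z [Hz [HGz Hxz]]].
  { apply (Rmult_lt_compat_r s) in Hw; auto. rewrite Rinv_l in Hw; lra. }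
  exists z. split; auto. rewrite edist_sumsq. apply sqrt_lt_of; auto. apply sumsq_nonneg.
Qed.

Theorem mainTheorem5 (Df : nat -> (list R -> Prop) -> Prop)
  (HS : OMinimalStructure Df) (Hpb : polynomially_bounded Df)
  (m n : nat) (G : list R -> Prop)
  (HGdef : Df (m + n)%nat G) (HGcl : closed_in (m + n)%nat G)
  (a y : list R) (Ha : length a = m) (Hy : length y = n) (Hay : G (a ++ y)) :
  exists delta C l : R, 0 < delta /\ 0 < C /\ 0 < l /\
    forall x v : list R, length x = m -> length v = n -> G (x ++ v) ->
      edist x a < delta -> edist v y < delta ->
      C * rpow (dist_to x (fun z => length z = m /\ G (z ++ y))) l <= edist v y.
Proof.
  assert (Hex : forall s, 0 < s -> exists t, goods m n G a y s t)
    by (intros; apply goods_exists; auto).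
  destruct (Hpb _ (graph_def HS m n G a y HGdef Ha Hy Hex)) as [N [M HNM]].
  set (s0 := Rmax M 1 + 1).
  assert (Hs0 : 1 < s0) by (unfold s0; pose proof (Rmax_r M 1); lra).
  assert (Hs0M : M < s0) by (unfold s0; pose proof (Rmax_l M 1); lra).
  destruct (phi_spec m n G a y s0 (Hex s0 ltac:(lra))) as [_ Htau].
  set (tau := phi m n G a y s0) in *.
  assert (H2 : 0 < / 2 ^ (S N)) by (apply Rinv_0_lt_compat, pow_lt; lra).
  exists 1, (Rmin (/ 2 ^ (S N)) tau), (INR (S N)).
  split; [lra|]. split; [apply Rmin_pos; auto|]. split; [apply lt_0_INR; lia|].
  intros x v Hx Hv HG Hxa Hvy.
  set (Sset := fun z => length z = m /\ G (z ++ y)).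
  set (D := dist_to x Sset). set (t := edist v y).
  assert (Ht0 : 0 <= t) by apply sqrt_pos.
  assert (Htt : sumsq v y = t * t) by (unfold t; rewrite edist_sumsq, sqrt_sqrt; auto; apply sumsq_nonneg).
  assert (Hxa' : sumsq x a < 1).
  { apply Rnot_le_lt. intros Hle. apply sqrt_le_1_alt in Hle. rewrite sqrt_1 in Hle.
    rewrite edist_sumsq in Hxa. lra. }
  assert (HD0 : 0 <= D) by (apply dist_nonneg; exists a; split; auto).
  assert (HD1 : D < 1) by (pose proof (dist_le Sset x a ltac:(split; auto)); unfold D; lra).
  assert (HC1 : Rmin (/ 2 ^ (S N)) tau <= / 2 ^ (S N)) by apply Rmin_l.
  assert (HC2 : Rmin (/ 2 ^ (S N)) tau <= tau) by apply Rmin_r.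
  assert (HC0 : 0 < Rmin (/ 2 ^ (S N)) tau) by (apply Rmin_pos; auto).
  fold Sset. fold D. unfold rpow. destruct (Rle_dec D 0) as [HD|HD]; [rewrite Rmult_0_r; auto|].
  rewrite Rpower_pow by lra.
  assert (HDp : 0 <= D ^ (S N)) by (apply pow_le; lra).
  destruct (Rle_or_lt tau t) as [Htt'|Htt'].
  - assert (D ^ (S N) <= 1) by (rewrite <- (pow1 (S N)); apply pow_incr; lra).
    apply Rle_trans with (tau * 1); [|lra]. apply Rmult_le_compat; lra.
  - assert (HDs0 : D <= / s0).
    { apply (key_lemma m n G a y Hex Ha Hay s0 t x v); auto; lra. }
    assert (Hkey : (D / 2) ^ (S N) <= t).
    { apply Rnot_lt_le. intros Hlt. set (u := D / 2).
      assert (Hu0 : 0 < u) by (unfold u; lra).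
      assert (Hu1 : u < 1) by (unfold u; lra).
      assert (Hs0p : 0 < / s0) by (apply Rinv_0_lt_compat; lra).
      assert (Hs : s0 < / u).
      { rewrite <- (Rinv_inv s0). apply Rinv_lt_contravar; [nra|]. unfold u; lra. }
      assert (Hsp : 0 < / u) by (apply Rinv_0_lt_compat; auto).
      specialize (HNM (/ u) ltac:(lra)).
      destruct (phi_spec m n G a y (/ u) (Hex _ Hsp)) as [_ Hphi].
      assert (Hf : fF m n G a y (/ u) = / phi m n G a y (/ u)).
      { unfold fF. destruct (Rlt_dec 0 (/ u)); [auto | lra]. }
      pose proof (Rle_abs (fF m n G a y (/ u))) as Habs.
      rewrite pow_inv in HNM.
      assert (HuN : 0 < u ^ N) by (apply pow_lt; auto).
      assert (Hphil : u ^ N <= phi m n G a y (/ u)).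
      { apply Rnot_lt_le. intros Hl. assert (/ u ^ N < / phi m n G a y (/ u)) by (apply Rinv_lt_contravar; nra). lra. }
      assert (HuSN : u ^ (S N) <= u ^ N) by (simpl; nra).
      assert (HDu : D <= / / u).
      { apply (key_lemma m n G a y Hex Ha Hay (/ u) t x v); auto; try lra. unfold u in *. lra. }
      rewrite Rinv_inv in HDu. unfold u in HDu. lra. }
    apply Rle_trans with (/ 2 ^ (S N) * D ^ (S N)).
    + apply Rmult_le_compat_r; auto.
    + unfold Rdiv in Hkey. rewrite Rpow_mult_distr, pow_inv in Hkey. lra.
Qed.
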